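(* Let $K\ge2$ and $T^K:=\{v\in\mathbb{R}^K:\|v\|_1=1,\ \sum_{k=1}^Kv_k=0\}$. For $\beta>0$ let $\|v\|_\beta=\left(\sum_{k=1}^K|v_k|^\beta\right)^{1/\beta}$. (1) If $0<\beta<1$, then $\min_{v\in T^K}\|v\|_\beta=2^{\frac1\beta-1}$, and the minimum is attained at the vector $v$ with $v_1=-\tfrac12$, $v_2=\tfrac12$ and $v_k=0$ for $k\ge3$. (2) If $\beta>1$, then \[ \min_{v\in T^K}\|v\|_\beta=\frac12\left(\left\lfloor\tfrac K2\right\rfloor^{1-\beta}+\left\lceil\tfrac K2\right\rceil^{1-\beta}\right)^{1/\beta}, \] and the minimum is attained at the vector $v$ with $v_k=\frac{1}{2\lfloor K/2\rfloor}$ for $1\le k\le\lfloor K/2\rfloor$ and $v_k=-\frac{1}{2\lceil K/2\rceil}$ for $\lfloor K/2\rfloor<k\le K$.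
   Context: $\|v\|_1=\sum_k|v_k|$. *)

(* Defs.v *)
From mathcomp Require Import all_boot all_order all_algebra.
From mathcomp Require Import all_classical all_reals all_analysis.
Unset Printing Implicit Defensive.
Import Order.TTheory GRing.Theory Num.Theory.
Local Open Scope ring_scope.
Local Open Scope classical_set_scope.

(* Vectors in R^K are functions 'I_K -> R; index k (0-based) corresponds to
   the paper's index k+1. *)

Definition TK (R : realType) (K : nat) : set ('I_K -> R) :=
  [set v | \sum_(k < K) `|v k| = 1 /\ \sum_(k < K) v k = 0].

Definition bnorm (R : realType) (K : nat) (beta : R) (v : 'I_K -> R) : R :=
  (\sum_(k < K) `|v k| `^ beta) `^ (beta^-1).

Definition vsmall (R : realType) (K : nat) : 'I_K -> R :=
  fun k => if val k == 0%N then - 2^-1 else if val k == 1%N then 2^-1 else 0.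

Definition vbig (R : realType) (K : nat) : 'I_K -> R :=
  fun k => if (val k < K./2)%N then (2 * (K./2)%:R)^-1
           else - (2 * (uphalf K)%:R)^-1.

(* Main.v *)
Require Import Defs.
From mathcomp Require Import all_boot all_order all_algebra.
From mathcomp Require Import all_classical all_reals all_analysis.
From mathcomp Require Import ring lra zify.
Import Order.TTheory GRing.Theory Num.Theory.
Local Open Scope ring_scope.

Section Helpers.
Variable R : realType.

Lemma bern_ge1 (r z : R) : 1 < r -> 0 <= z -> 1 + r * (z - 1) <= z `^ r.
Proof.
move=> r1 z0.
have r0 : 0 < r by apply: lt_trans r1.
have r10 : 0 < r - 1 by rewrite subr_gt0.
have q0 : 0 < r / (r - 1) by rewrite divr_gt0.
have pq : r^-1 + (r / (r - 1))^-1 = 1.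
  rewrite invf_div; field; rewrite !gt_eqF //.
have := conjugate_powR z0 ler01 r0 q0 pq.
rewrite powR1 invf_div mulr1 mul1r.
set w := z `^ r.
have -> : w / r + (r - 1) / r = (w + r - 1) / r by field; rewrite gt_eqF.
rewrite ler_pdivlMr // => h.
lra.
Qed.

Lemma tangent_ge1 (r x y : R) : 1 < r -> 0 < x -> 0 <= y ->
  x `^ r + r * x `^ (r - 1) * (y - x) <= y `^ r.
Proof.
move=> r1 x0 y0.
have z0 : 0 <= y / x by rewrite divr_ge0 // ltW.
have -> : y = x * (y / x) by field; rewrite gt_eqF.
rewrite (powRM _ (ltW x0) z0). rewrite (@powRB _ x r 1); last by rewrite (gt_eqF x0) implybT. rewrite powRr1; last exact: ltW.
set z := y / x; set a := x `^ r.
have -> : a + r * (a / x) * (x * z - x) = a * (1 + r * (z - 1)) by field; rewrite gt_eqF.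
by rewrite ler_wpM2l ?powR_ge0 // bern_ge1.
Qed.

Lemma tangent_neg (g x y : R) : g < 0 -> 0 < x -> 0 < y ->
  x `^ g + g * x `^ (g - 1) * (y - x) <= y `^ g.
Proof.
move=> g0 x0 y0.
have z0 : 0 < y / x by rewrite divr_gt0.
have -> : y = x * (y / x) by field; rewrite gt_eqF.
rewrite (powRM _ (ltW x0) (ltW z0)) (@powRB _ x g 1); last by rewrite (gt_eqF x0) implybT.
rewrite powRr1; last exact: ltW.
set z := y / x in z0 *.
have h1 : 1 + g * (z - 1) <= z `^ g.
  have hz : z `^ g = expR (ln z * g).
    by rewrite expRM lnK // posrE.
  rewrite hz.
  have hl : ln z <= z - 1.
    have := @le_ln1Dx R (z - 1); rewrite addrCA subrr addr0; apply; lra.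
  apply: le_trans (expR_ge1Dx _).
  nra.
set a := x `^ g.
have -> : a + g * (a / x) * (x * z - x) = a * (1 + g * (z - 1)) by field; rewrite gt_eqF.
by rewrite ler_wpM2l ?powR_ge0.
Qed.


Lemma sum_tangent (I : finType) (P : pred I) (x : I -> R) (r t : R) :
  1 < r -> 0 < t -> (forall i, P i -> 0 <= x i) ->
  #|P|%:R * t `^ r + r * t `^ (r - 1) * (\sum_(i | P i) x i - #|P|%:R * t)
    <= \sum_(i | P i) x i `^ r.
Proof.
move=> r1 t0 hx.
have H : \sum_(i | P i) (t `^ r + r * t `^ (r - 1) * (x i - t)) <= \sum_(i | P i) x i `^ r.
  apply: ler_sum => i Pi. exact: (tangent_ge1 _ _ _ r1 t0 (hx i Pi)).
apply: le_trans H.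
have hc : forall c : R, \sum_(i | P i) c = #|P|%:R * c.
  move=> c; transitivity (\sum_(i in P) c); last by rewrite sumr_const mulr_natl.
  by apply: eq_bigl => i.
rewrite big_split /= -mulr_sumr sumrB !hc.
rewrite le_eqVlt; apply/orP; left; apply/eqP; ring.
Qed.

Lemma sum_power_lb (I : finType) (P : pred I) (x : I -> R) (r s : R) :
  1 < r -> (0 < #|P|)%N -> 0 < s -> (forall i, P i -> 0 <= x i) ->
  \sum_(i | P i) x i = s ->
  #|P|%:R * (s / #|P|%:R) `^ r <= \sum_(i | P i) x i `^ r.
Proof.
move=> r1 n0 s0 hx hs.
have n0' : 0 < #|P|%:R :> R by rewrite ltr0n.
have := sum_tangent _ _ x _ _ r1 (divr_gt0 s0 n0') hx.
rewrite hs mulrCA mulfV ?gt_eqF // mulr1 subrr mulr0 addr0.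
by [].
Qed.

Lemma cE (n : nat) (r : R) : (0 < n)%N ->
  n%:R * (2 * n%:R)^-1 `^ r = 2^-1 `^ r * n%:R `^ (1 - r).
Proof.
move=> n0.
have n0' : 0 < n%:R :> R by rewrite ltr0n.
rewrite invfM powRM ?invr_ge0 ?ler0n // mulrCA; congr (_ * _).
rewrite -(powR_inv1 (ler0n _ n)) -powRrM mulN1r.
rewrite -{1}(powRr1 (ler0n _ n)) -powRD //.
by rewrite (gt_eqF n0') implybT.
Qed.

Lemma halfK_facts (K : nat) : (2 <= K)%N ->
  [/\ (K./2 + uphalf K = K)%N, (K./2 <= uphalf K)%N, (uphalf K <= K./2 + 1)%N & (0 < K./2)%N].
Proof.
move=> hK.
have h1 := odd_double_half K.
have h2 := uphalf_half K.
have h3 : (odd K <= 1)%N by case: (odd K).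
rewrite -addnn in h1.
split; lia.
Qed.

Lemma lemB0 (K p q : nat) (r : R) : (2 <= K)%N -> 1 < r ->
  (0 < p)%N -> (p <= q)%N -> (p + q = K)%N ->
  (K./2)%:R `^ (1 - r) + (uphalf K)%:R `^ (1 - r) <= p%:R `^ (1 - r) + q%:R `^ (1 - r).
Proof.
move=> hK r1 p0 pq hpq.
have [hmM mM Mm m0] := halfK_facts _ hK.
set m := K./2 in hmM mM Mm m0 *; set M := uphalf K in hmM mM Mm m0 *.
have pm : (p <= m)%N by lia.
have qM : (q + p = m + M)%N by lia.
have q0 : (0 < q)%N by lia.
have M0 : (0 < M)%N by lia.
have g0 : 1 - r < 0 by lra.
have hp := tangent_neg _ _ _ g0 (ltr0Sn _ m.-1) (ltr0Sn _ p.-1).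
have hq := tangent_neg _ _ _ g0 (ltr0Sn _ M.-1) (ltr0Sn _ q.-1).
rewrite !prednK // in hp hq.
have e : 1 - r - 1 = - r by ring.
rewrite e !powRN in hp hq.
have ab : (M%:R `^ r)^-1 <= (m%:R `^ r)^-1 :> R.
  rewrite lef_pV2 ?posrE ?powR_gt0 ?ltr0n //.
  apply: ge0_ler_powR; rewrite ?nnegrE ?ler_nat //; lra.
have bge : 0 <= (M%:R `^ r)^-1 :> R by rewrite invr_ge0 powR_ge0.
have pmR : p%:R <= m%:R :> R by rewrite ler_nat.
have qMR : q%:R + p%:R = m%:R + M%:R :> R by rewrite -!natrD qM.
set a := (m%:R `^ r)^-1 in hp ab; set b := (M%:R `^ r)^-1 in hq ab bge.
have h : 0 <= (a - b) * (m%:R - p%:R) by rewrite mulr_ge0 // subr_ge0.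
have h2 : (1 - r) * ((a - b) * (m%:R - p%:R)) <= 0.
  by rewrite mulr_le0_ge0 // ltW.
have e2 : (1 - r) * a * (p%:R - m%:R) + (1 - r) * b * (q%:R - M%:R)
   = - ((1 - r) * ((a - b) * (m%:R - p%:R))).
  have -> : q%:R = m%:R + M%:R - p%:R :> R by lra.
  ring.
apply: le_trans (lerD hp hq).
by rewrite addrACA e2 lerDl oppr_ge0.
Qed.


Lemma lemB (K p q : nat) (r : R) : (2 <= K)%N -> 1 < r ->
  (0 < p)%N -> (0 < q)%N -> (p + q = K)%N ->
  (K./2)%:R `^ (1 - r) + (uphalf K)%:R `^ (1 - r) <= p%:R `^ (1 - r) + q%:R `^ (1 - r).
Proof.
move=> hK r1 p0 q0 hpq.
case: (leqP p q) => h; first exact: lemB0.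
rewrite [X in _ <= X]addrC; apply: lemB0 => //; first exact: ltnW.
by rewrite addnC.
Qed.

Lemma split_sum (K m : nat) (f : 'I_K -> R) (a b : R) : (m <= K)%N ->
  (forall k : 'I_K, f k = if (val k < m)%N then a else b) ->
  \sum_(k < K) f k = m%:R * a + (K - m)%:R * b.
Proof.
move=> mK hf.
rewrite (eq_bigr (fun k : 'I_K => (fun i : nat => if (i < m)%N then a else b) (val k))); last first.
  by move=> k _; rewrite hf.
rewrite -(big_mkord xpredT (fun i => if (i < m)%N then a else b)).
rewrite (big_cat_nat (leq0n m) mK) /=.
rewrite (@eq_big_nat _ _ _ 0 m _ (fun=> a)); last by move=> i /andP[_ ->].
rewrite (@eq_big_nat _ _ _ m K _ (fun=> b)); last by move=> i /andP[]; rewrite leqNgt => /negbTE ->.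
by rewrite !sumr_const_nat subn0 !mulr_natl.
Qed.

Lemma sum_vsmall_gen (K : nat) (g : R -> R) : (2 <= K)%N -> g 0 = 0 ->
  \sum_(k < K) g (vsmall R K k) = g (- 2^-1) + g (2^-1).
Proof.
move=> hK g0.
rewrite (eq_bigr (fun k : 'I_K => (fun i : nat => g (if i == 0%N then - 2^-1 else if i == 1%N then 2^-1 else 0)) (val k))); last first.
  by move=> k _; rewrite /vsmall.
rewrite -(big_mkord xpredT (fun i : nat => g (if i == 0%N then - 2^-1 else if i == 1%N then 2^-1 else 0))).
case: K hK => [|[|K']] // _.
rewrite !big_nat_recl //= big1 ?addr0 // => i _ /=.
Qed.


Lemma TK_halves (K : nat) (v : 'I_K -> R) :
  \sum_(k < K) `|v k| = 1 -> \sum_(k < K) v k = 0 ->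
  \sum_(k < K | 0 < v k) `|v k| = 2^-1 /\ \sum_(k < K | ~~ (0 < v k)) `|v k| = 2^-1.
Proof.
move=> h1 h2.
have e1 : \sum_(k < K | 0 < v k) `|v k| = \sum_(k < K | 0 < v k) v k.
  by apply: eq_bigr => k hk; rewrite gtr0_norm.
have e2 : \sum_(k < K | ~~ (0 < v k)) `|v k| = - \sum_(k < K | ~~ (0 < v k)) v k.
  by rewrite -sumrN; apply: eq_bigr => k; rewrite -leNgt => hk; rewrite ler0_norm.
rewrite (bigID (fun k => 0 < v k)) /= in h1.
rewrite (bigID (fun k => 0 < v k)) /= in h2.
rewrite e1 e2 in h1 *.
split; lra.
Qed.

Lemma TK_le_half (K : nat) (v : 'I_K -> R) :
  \sum_(k < K) `|v k| = 1 -> \sum_(k < K) v k = 0 -> forall k, `|v k| <= 2^-1.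
Proof.
move=> h1 h2 k.
have [sP sN] := TK_halves _ _ h1 h2.
case: (boolP (0 < v k)) => Pk.
  rewrite -sP (bigD1 k) //= lerDl; apply: sumr_ge0 => i _; exact: normr_ge0.
rewrite -sN (bigD1 k) //= lerDl; apply: sumr_ge0 => i _; exact: normr_ge0.
Qed.

Lemma lowpow (beta x : R) : 0 < beta -> beta < 1 -> 0 <= x -> x <= 2^-1 ->
  2 `^ (1 - beta) * x <= x `^ beta.
Proof.
move=> b0 b1 x0 xh.
case: (eqVneq x 0) => [->|xn0]; first by rewrite mulr0 powR0 ?gt_eqF.
have xp : 0 < x by rewrite lt_def xn0.
rewrite -(mulr_powRB1 x0 b0). rewrite mulrC ler_pM2l //.
have e : beta - 1 = - (1 - beta) by ring.
rewrite e powRN.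
have h2 : 2 `^ (1 - beta) = ((2^-1) `^ (1 - beta))^-1 :> R.
  by rewrite -powRN -(powR_inv1 (ler0n _ 2)) -powRrM mulN1r opprK.
rewrite h2 lef_pV2 ?posrE ?powR_gt0 ?invr_gt0 ?ltr0n //.
apply: ge0_ler_powR; rewrite ?nnegrE ?invr_ge0 ?ler0n //; lra.
Qed.


Lemma part1 (K : nat) (hK : (2 <= K)%N) (beta : R) : 0 < beta -> beta < 1 ->
     vsmall R K \in TK R K /\
     bnorm R K beta (vsmall R K) = 2 `^ (beta^-1 - 1) /\
     (forall v, v \in TK R K -> bnorm R K beta (vsmall R K) <= bnorm R K beta v).
Proof.
move=> b0 b1.
have hsum : \sum_(k < K) `|vsmall R K k| `^ beta = 2 `^ (1 - beta).
  rewrite (sum_vsmall_gen _ (fun x => `|x| `^ beta)) //=; last by rewrite normr0 powR0 // gt_eqF.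
  rewrite normrN ger0_norm ?invr_ge0 ?ler0n //.
  rewrite -(powR_inv1 (ler0n _ 2)) -powRrM mulN1r.
  rewrite powRD; last by rewrite implybE pnatr_eq0 orbT.
  rewrite powRr1; last exact: ler0n.
  lra.
have hb : bnorm R K beta (vsmall R K) = (2 `^ (1 - beta)) `^ beta^-1.
  by rewrite /bnorm -hsum.
have hmem : vsmall R K \in TK R K.
  apply/mem_set; split.
    rewrite (sum_vsmall_gen _ (fun x => `|x|)) //=; last by rewrite normr0.
    rewrite normrN ger0_norm ?invr_ge0 ?ler0n //; lra.
  by rewrite (sum_vsmall_gen _ (fun x => x)) //= addNr.
split; first exact: hmem.
split.
  rewrite hb -powRrM; congr (_ `^ _); field; by rewrite gt_eqF.
move=> v /set_mem [h1 h2].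
rewrite hb /bnorm.
apply: ge0_ler_powR; [by rewrite invr_ge0 ltW | by rewrite nnegrE powR_ge0 | by rewrite nnegrE sumr_ge0 // => k _; rewrite powR_ge0 |].
have hh := TK_le_half _ _ h1 h2.
apply: (@le_trans _ _ (\sum_(k < K) 2 `^ (1 - beta) * `|v k|)).
  by rewrite -mulr_sumr h1 mulr1.
apply: ler_sum => k _; apply: lowpow => //.
Qed.


Lemma part2 (K : nat) (hK : (2 <= K)%N) (beta : R) : 1 < beta ->
     vbig R K \in TK R K /\
     bnorm R K beta (vbig R K) =
       2^-1 * (((K./2)%:R `^ (1 - beta) + (uphalf K)%:R `^ (1 - beta)) `^ (beta^-1)) /\
     (forall v, v \in TK R K -> bnorm R K beta (vbig R K) <= bnorm R K beta v).
Proof.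
move=> b1.
have b0 : 0 < beta by apply: lt_trans b1.
have [hmM mM Mm m0] := halfK_facts _ hK.
have hv : forall k : 'I_K, vbig R K k =
   if (val k < K./2)%N then (2 * (K./2)%:R)^-1 else - (2 * (uphalf K)%:R)^-1 by [].
set m := K./2 in hmM mM Mm m0 hv *; set M := uphalf K in hmM mM Mm m0 hv *.
have M0 : (0 < M)%N by lia.
have mK : (m <= K)%N by lia.
have KmM : (K - m)%N = M by lia.
have mR : 0 < m%:R :> R by rewrite ltr0n.
have MR : 0 < M%:R :> R by rewrite ltr0n.
have ha : 0 <= (2 * m%:R)^-1 :> R by rewrite invr_ge0 mulr_ge0 ?ler0n.
have hb' : 0 <= (2 * M%:R)^-1 :> R by rewrite invr_ge0 mulr_ge0 ?ler0n.
have hsum : \sum_(k < K) `|vbig R K k| `^ beta =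
    2^-1 `^ beta * m%:R `^ (1 - beta) + 2^-1 `^ beta * M%:R `^ (1 - beta).
  rewrite (@split_sum K m (fun k => `|vbig R K k| `^ beta)
      ((2 * m%:R)^-1 `^ beta) ((2 * M%:R)^-1 `^ beta) mK); last first.
    by move=> k; rewrite hv; case: ifP => _; rewrite ?normrN ger0_norm.
  by rewrite KmM !cE.
have hb : bnorm R K beta (vbig R K) =
    (2^-1 `^ beta * m%:R `^ (1 - beta) + 2^-1 `^ beta * M%:R `^ (1 - beta)) `^ beta^-1.
  by rewrite /bnorm -hsum.
have hmem : vbig R K \in TK R K.
  apply/mem_set; split.
    rewrite (@split_sum K m (fun k => `|vbig R K k|) ((2 * m%:R)^-1) ((2 * M%:R)^-1) mK); last first.
      by move=> k; rewrite hv; case: ifP => _; rewrite ?normrN ger0_norm.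
    rewrite KmM; field; by rewrite !gt_eqF.
  rewrite (@split_sum K m (fun k => vbig R K k) ((2 * m%:R)^-1) (- (2 * M%:R)^-1) mK) //.
  rewrite KmM; field; by rewrite !gt_eqF.
split; first exact: hmem.
split.
  rewrite hb -mulrDr powRM ?powR_ge0 // -powRrM mulfV ?gt_eqF // powRr1 // invr_ge0 ler0n.
move=> v /set_mem [h1 h2].
have [sP sN] := TK_halves _ _ h1 h2.
pose P : pred 'I_K := fun k => 0 < v k.
have h2p : 0 < 2^-1 :> R by rewrite invr_gt0 ltr0n.
have p0 : (0 < #|P|)%N.
  rewrite lt0n; apply/eqP => /card0_eq h0; move: sP.
  rewrite big_pred0; last by move=> k; have := h0 k; rewrite !inE.
  move=> e; lra.
have q0 : (0 < #|predC P|)%N.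
  rewrite lt0n; apply/eqP => /card0_eq h0; move: sN.
  rewrite big_pred0; last by move=> k; have := h0 k; rewrite !inE.
  move=> e; lra.
have hcard : (#|P| + #|predC P| = K)%N by rewrite cardC card_ord.
have hPl := sum_power_lb _ P (fun k => `|v k|) beta (2^-1) b1 p0 h2p (fun i _ => normr_ge0 _) sP.
have hQl := sum_power_lb _ (predC P) (fun k => `|v k|) beta (2^-1) b1 q0 h2p (fun i _ => normr_ge0 _) sN.
rewrite -invfM cE // in hPl.
rewrite -invfM cE // in hQl.
rewrite hb /bnorm.
apply: ge0_ler_powR; [by rewrite invr_ge0 ltW | by rewrite nnegrE addr_ge0 // mulr_ge0 // powR_ge0 | by rewrite nnegrE sumr_ge0 // => k _; rewrite powR_ge0 |].
rewrite (bigID P) /=.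
apply: le_trans (lerD hPl hQl).
rewrite -!mulrDr; apply: ler_wpM2l; first exact: powR_ge0.
exact: lemB.
Qed.

End Helpers.

Local Open Scope classical_set_scope.

Theorem lemma2 (R : realType) (K : nat) (hK : (2 <= K)%N) :
  (forall beta : R, 0 < beta -> beta < 1 ->
     vsmall R K \in TK R K /\
     bnorm R K beta (vsmall R K) = 2 `^ (beta^-1 - 1) /\
     (forall v, v \in TK R K -> bnorm R K beta (vsmall R K) <= bnorm R K beta v)) /\
  (forall beta : R, 1 < beta ->
     vbig R K \in TK R K /\
     bnorm R K beta (vbig R K) =
       2^-1 * (((K./2)%:R `^ (1 - beta) + (uphalf K)%:R `^ (1 - beta)) `^ (beta^-1)) /\
     (forall v, v \in TK R K -> bnorm R K beta (vbig R K) <= bnorm R K beta v)).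
Proof.
split => beta; [exact: part1 | exact: part2].
Qed.
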